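(* Let $\mathbb A=(3,12^2)$ be the Archimedean (Fisher) lattice obtained from the hexagonal lattice $\mathbb H$ by replacing each vertex by a triangle. Then the connective constants satisfy $$\frac{1}{\kappa(\mathbb A)^2}+\frac{1}{\kappa(\mathbb A)^3}=\frac{1}{\kappa(\mathbb H)}.$$
   Context: For a vertex-transitive lattice $\mathcal L$, the connective constant is $\kappa(\mathcal L)=\lim_{n\to\infty}\sigma_n^{1/n}$, where $\sigma_n$ is the number of self-avoiding walks (paths visiting no vertex twice) of length $n$ starting at a fixed vertex. In $\mathbb A$, each vertex of $\mathbb H$ is replaced by a triangle whose three vertices are each joined to one of the three edges formerly incident to that vertex; edges lying in such triangles are called triangular. *)

(* Defs.v *)
From Stdlib Require Import Reals ZArith List ListDec.
Import ListNotations.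
Open Scope R_scope.

(** Both lattices are 3-regular; we describe each by a neighbour function
    [nb : V -> dir -> V] listing the three (pairwise distinct) neighbours of
    a vertex.  A walk of length n from v is then determined by its sequence of
    n direction choices. *)
Inductive dir : Set := D0 | D1 | D2.

Definition dir_next (d : dir) : dir :=
  match d with D0 => D1 | D1 => D2 | D2 => D0 end.

(** Hexagonal lattice H (brick-wall embedding): vertices (x, y, colour).
    A black vertex (x,y,false) is adjacent to the white vertices
    (x,y,true), (x-1,y,true), (x,y-1,true). *)
Definition HV : Set := (Z * Z * bool)%type.

Definition hnb (v : HV) (d : dir) : HV :=
  match v with
  | (x, y, false) =>
      match d with
      | D0 => (x, y, true)
      | D1 => ((x - 1)%Z, y, true)
      | D2 => (x, (y - 1)%Z, true)
      end
  | (x, y, true) =>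
      match d with
      | D0 => (x, y, false)
      | D1 => ((x + 1)%Z, y, false)
      | D2 => (x, (y + 1)%Z, false)
      end
  end.

(** Note: for every v and d, hnb (hnb v d) d = v, i.e. the edge of H at v in
    direction d is also the edge at its other endpoint in direction d. *)

(** Archimedean lattice A = (3,12^2): each vertex v of H is replaced by a
    triangle {(v,D0),(v,D1),(v,D2)}; vertex (v,i) is joined to the two other
    triangle vertices (triangular edges) and, by a non-triangular edge, to
    (hnb v i, i), the vertex of the neighbouring triangle lying on the former
    H-edge from v in direction i. *)
Definition AV : Set := (HV * dir)%type.

Definition anb (a : AV) (d : dir) : AV :=
  let (v, i) := a in
  match d with
  | D0 => (hnb v i, i)
  | D1 => (v, dir_next i)
  | D2 => (v, dir_next (dir_next i))
  end.

Definition HV_eq_dec : forall u v : HV, {u = v} + {u <> v}.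
Proof. decide equality; [apply Bool.bool_dec | decide equality; apply Z.eq_dec]. Defined.

Definition dir_eq_dec : forall u v : dir, {u = v} + {u <> v}.
Proof. decide equality. Defined.

Definition AV_eq_dec : forall u v : AV, {u = v} + {u <> v}.
Proof. decide equality; [apply dir_eq_dec | apply HV_eq_dec]. Defined.

Fixpoint traj {V : Type} (nb : V -> dir -> V) (v : V) (ds : list dir) : list V :=
  v :: match ds with
       | [] => []
       | d :: ds' => traj nb (nb v d) ds'
       end.

Fixpoint all_dirs (n : nat) : list (list dir) :=
  match n with
  | O => [[]]
  | S m => flat_map (fun ds => [D0 :: ds; D1 :: ds; D2 :: ds]) (all_dirs m)
  end.

(** Transparent decision procedure for [NoDup] (the Stdlib one is opaque). *)
Definition NoDup_dec' {V : Type} (eq_dec : forall u w : V, {u = w} + {u <> w})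
  (l : list V) : {NoDup l} + {~ NoDup l}.
Proof.
  induction l as [|a l IH].
  - left; constructor.
  - destruct (in_dec eq_dec a l) as [Hin|Hin].
    + right; intro H; inversion H; contradiction.
    + destruct IH as [IH|IH].
      * left; constructor; assumption.
      * right; intro H; inversion H; contradiction.
Defined.

Definition saw_count {V : Type} (eq_dec : forall u w : V, {u = w} + {u <> w})
  (nb : V -> dir -> V) (v : V) (n : nat) : nat :=
  length (filter (fun ds => if NoDup_dec' eq_dec (traj nb v ds) then true else false)
                 (all_dirs n)).

Definition H_origin : HV := (0%Z, 0%Z, false).
Definition A_origin : AV := (H_origin, D0).

Definition sigmaH (n : nat) : nat := saw_count HV_eq_dec hnb H_origin n.
Definition sigmaA (n : nat) : nat := saw_count AV_eq_dec anb A_origin n.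

Definition is_connective_constant (sigma : nat -> nat) (kappa : R) : Prop :=
  Un_cv (fun n => Rpower (INR (sigma n)) (/ INR n)) kappa.

(* Main.v *)
Require Import Defs.
From Stdlib Require Import Reals Lra Lia ZArith List ListDec Arith.
Import ListNotations.
Open Scope R_scope.


Lemma all_dirs_len : forall n ds, In ds (all_dirs n) <-> length ds = n.
Proof.
  induction n as [|n IH]; intros ds; simpl.
  - split; [intros [H|[]]; subst; reflexivity|].
    destruct ds; simpl; intros H; [left; reflexivity|discriminate].
  - rewrite in_flat_map. split.
    + intros [a [Ha Hin]]. apply IH in Ha.
      simpl in Hin; destruct Hin as [<-|[<-|[<-|[]]]]; simpl; lia.
    + destruct ds as [|d ds]; simpl; [discriminate|]. intros H.
      exists ds. split; [apply IH; lia|].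
      destruct d; simpl; tauto.
Qed.

Lemma NoDup_flat_map' {A B : Type} (F : A -> list B) (l : list A) :
  NoDup l -> (forall a, In a l -> NoDup (F a)) ->
  (forall a b x, In a l -> In b l -> In x (F a) -> In x (F b) -> a = b) ->
  NoDup (flat_map F l).
Proof.
  induction l as [|a l IH]; simpl; intros Hnd HF Hdis; [constructor|].
  inversion Hnd; subst.
  apply NoDup_app.
  - apply HF; auto.
  - apply IH; auto. intros; eapply Hdis; eauto.
  - intros x Hx Hx2. apply in_flat_map in Hx2. destruct Hx2 as [b [Hb Hxb]].
    assert (a = b) by (eapply Hdis; eauto). subst. contradiction.
Qed.

Lemma all_dirs_NoDup : forall n, NoDup (all_dirs n).
Proof.
  induction n as [|n IH]; simpl.
  - repeat constructor; simpl; tauto.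
  - apply NoDup_flat_map'; auto.
    + intros a _. repeat constructor; simpl; intuition discriminate.
    + intros a b x _ _ Ha Hb. simpl in Ha, Hb.
      intuition (subst; try discriminate; congruence).
Qed.

Section Walks.
Context {V : Type} (eqd : forall u w : V, {u = w} + {u <> w}) (nb : V -> dir -> V).

Definition sawb (v : V) (ds : list dir) : bool :=
  if NoDup_dec' eqd (traj nb v ds) then true else false.

Definition sawlist (v : V) (n : nat) := filter (sawb v) (all_dirs n).

Lemma saw_count_eq v n : saw_count eqd nb v n = length (sawlist v n).
Proof. reflexivity. Qed.

Lemma sawb_true v ds : sawb v ds = true <-> NoDup (traj nb v ds).
Proof. unfold sawb. destruct (NoDup_dec' eqd _); split; auto; discriminate. Qed.

Lemma in_sawlist v n ds : In ds (sawlist v n) <-> length ds = n /\ NoDup (traj nb v ds).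
Proof.
  unfold sawlist. rewrite filter_In, all_dirs_len, sawb_true. tauto.
Qed.

Lemma sawlist_NoDup v n : NoDup (sawlist v n).
Proof. apply NoDup_filter, all_dirs_NoDup. Qed.

Fixpoint wend (v : V) (ds : list dir) : V :=
  match ds with [] => v | d :: ds' => wend (nb v d) ds' end.

Lemma traj_app v a b :
  traj nb v (a ++ b) = removelast (traj nb v a) ++ traj nb (wend v a) b.
Proof.
  revert v; induction a as [|d a IH]; intros v; simpl; [reflexivity|].
  rewrite IH. destruct a; simpl; reflexivity.
Qed.

Lemma traj_app' v a b :
  traj nb v (a ++ b) = traj nb v a ++ tl (traj nb (wend v a) b).
Proof.
  revert v; induction a as [|d a IH]; intros v; simpl.
  - destruct b; reflexivity.
  - rewrite IH. reflexivity.
Qed.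

Lemma saw_prefix v a b : NoDup (traj nb v (a ++ b)) -> NoDup (traj nb v a).
Proof. rewrite traj_app'. apply NoDup_app_remove_r. Qed.

Lemma saw_suffix v a b : NoDup (traj nb v (a ++ b)) -> NoDup (traj nb (wend v a) b).
Proof. rewrite traj_app. apply NoDup_app_remove_l. Qed.

Lemma traj_map (phi : V -> V) :
  (forall v d, nb (phi v) d = phi (nb v d)) ->
  forall ds v, traj nb (phi v) ds = map phi (traj nb v ds).
Proof.
  intros H; induction ds as [|d ds IH]; intros v; simpl; [reflexivity|].
  rewrite H, IH. reflexivity.
Qed.

Lemma auto_count (phi : V -> V) :
  (forall a b, phi a = phi b -> a = b) ->
  (forall v d, nb (phi v) d = phi (nb v d)) ->
  forall v n, saw_count eqd nb (phi v) n = saw_count eqd nb v n.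
Proof.
  intros Hinj Hc v n. rewrite !saw_count_eq. unfold sawlist. f_equal.
  apply filter_ext. intros ds.
  destruct (sawb v ds) eqn:E1; destruct (sawb (phi v) ds) eqn:E2; auto.
  - apply sawb_true in E1. exfalso.
    assert (NoDup (traj nb (phi v) ds)).
    { rewrite traj_map by auto. apply NoDup_map_NoDup_ForallPairs; auto.
      intros a b _ _ E; apply Hinj; auto. }
    apply sawb_true in H. congruence.
  - apply sawb_true in E2. rewrite traj_map in E2 by auto.
    apply NoDup_map_inv in E2. apply sawb_true in E2. congruence.
Qed.

Lemma length_flat_map_const {A B : Type} (F : A -> list B) (l : list A) k :
  (forall a, In a l -> length (F a) = k) -> length (flat_map F l) = (length l * k)%nat.
Proof.
  induction l as [|a l IH]; simpl; intros H; [reflexivity|].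
  rewrite length_app, H by auto. rewrite IH by auto. lia.
Qed.

Lemma submult (s : nat -> nat) (v : V) :
  (forall u n, saw_count eqd nb u n = s n) ->
  forall m n, (s (m + n) <= s m * s n)%nat.
Proof.
  intros Hs m n. rewrite <- (Hs v (m+n)%nat), <- (Hs v m).
  rewrite !saw_count_eq.
  transitivity (length (flat_map (fun a => map (fun b => a ++ b) (sawlist (wend v a) n))
                                 (sawlist v m))).
  - apply NoDup_incl_length; [apply sawlist_NoDup|].
    intros ds Hds. apply in_sawlist in Hds. destruct Hds as [Hl Hnd].
    apply in_flat_map. exists (firstn m ds).
    rewrite <- (firstn_skipn m ds) in Hnd.
    split.
    + apply in_sawlist. split; [rewrite length_firstn; lia|].
      eapply saw_prefix; eauto.
    + apply in_map_iff. exists (skipn m ds). split; [apply firstn_skipn|].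
      apply in_sawlist. split; [rewrite length_skipn; lia|].
      eapply saw_suffix; eauto.
  - rewrite (length_flat_map_const _ _ (s n)).
    + lia.
    + intros a _. rewrite length_map, <- saw_count_eq, Hs. reflexivity.
Qed.

End Walks.

Definition isauto {V : Type} (nb : V -> dir -> V) (phi : V -> V) : Prop :=
  (forall a b, phi a = phi b -> a = b) /\ (forall v d, nb (phi v) d = phi (nb v d)).

Lemma isauto_comp {V : Type} (nb : V -> dir -> V) f g :
  isauto nb f -> isauto nb g -> isauto nb (fun v => f (g v)).
Proof.
  intros [F1 F2] [G1 G2]; split; intros.
  - apply G1, F1; auto.
  - rewrite F2, G2; reflexivity.
Qed.

Lemma hnb_inv v d : hnb (hnb v d) d = v.
Proof.
  destruct v as [[x y] c]; destruct c, d; simpl; f_equal; try f_equal; lia.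
Qed.

Definition transl (a b : Z) (v : HV) : HV :=
  match v with (x, y, c) => ((x + a)%Z, (y + b)%Z, c) end.
Definition cswap (v : HV) : HV :=
  match v with (x, y, c) => ((- x)%Z, (- y)%Z, negb c) end.
Definition rotH (v : HV) : HV :=
  match v with
  | (x, y, false) => ((- x - y)%Z, x, false)
  | (x, y, true) => ((- x - y - 1)%Z, x, true)
  end.

Ltac hv_solve :=
  repeat match goal with
  | v : HV |- _ => destruct v as [[? ?] ?]
  | c : bool |- _ => destruct c
  | d : dir |- _ => destruct d
  end; simpl in *;
  repeat match goal with
  | H : (_, _) = (_, _) |- _ => injection H; clear H; intros
  end; subst; try discriminate; try (f_equal; try f_equal; lia).

Lemma transl_auto a b : isauto hnb (transl a b).
Proof. split; intros; hv_solve. Qed.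
Lemma cswap_auto : isauto hnb cswap.
Proof. split; intros; hv_solve. Qed.
Lemma rotH_inj a b : rotH a = rotH b -> a = b.
Proof. intros; hv_solve. Qed.
Lemma rotH_shift v d : hnb (rotH v) (dir_next d) = rotH (hnb v d).
Proof. hv_solve. Qed.

Lemma H_trans u : exists phi, isauto hnb phi /\ phi H_origin = u.
Proof.
  destruct u as [[x y] c]. destruct c.
  - exists (fun v => transl x y (cswap v)). split.
    + apply isauto_comp; [apply transl_auto|apply cswap_auto].
    + simpl; f_equal; f_equal; lia.
  - exists (transl x y). split; [apply transl_auto|]. simpl; f_equal; f_equal; lia.
Qed.

Lemma countH u n : saw_count HV_eq_dec hnb u n = sigmaH n.
Proof.
  destruct (H_trans u) as [phi [[H1 H2] <-]].
  unfold sigmaH. apply auto_count; auto.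
Qed.

Definition liftA (phi : HV -> HV) (a : AV) : AV := let (v, i) := a in (phi v, i).
Definition rotA (a : AV) : AV := let (v, i) := a in (rotH v, dir_next i).

Lemma liftA_auto phi : isauto hnb phi -> isauto anb (liftA phi).
Proof.
  intros [H1 H2]; split.
  - intros [v i] [w j]; simpl; intros E; injection E; intros; subst.
    f_equal; auto.
  - intros [v i] d; destruct d; simpl; try reflexivity. rewrite H2; reflexivity.
Qed.

Lemma rotA_auto : isauto anb rotA.
Proof.
  split.
  - intros [v i] [w j]; simpl; intros E; injection E; intros E1 E2.
    apply rotH_inj in E2; subst. f_equal. destruct i, j; simpl in *; congruence.
  - intros [v i] d; destruct d; simpl; try reflexivity.
    rewrite rotH_shift; reflexivity.
Qed.

Lemma A_trans a : exists phi, isauto anb phi /\ phi A_origin = a.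
Proof.
  destruct a as [v i].
  destruct (H_trans v) as [phi [Hphi Ho]].
  assert (Hr : rotH H_origin = H_origin) by reflexivity.
  destruct i.
  - exists (liftA phi); split; [apply liftA_auto; auto|]. simpl; rewrite Ho; reflexivity.
  - exists (fun a => liftA phi (rotA a)); split.
    + apply isauto_comp; [apply liftA_auto; auto|apply rotA_auto].
    + exact (f_equal (fun z => (z, D1)) Ho).
  - exists (fun a => liftA phi (rotA (rotA a))); split.
    + apply isauto_comp; [apply liftA_auto; auto|apply isauto_comp; apply rotA_auto].
    + exact (f_equal (fun z => (z, D2)) Ho).
Qed.

Lemma countA a n : saw_count AV_eq_dec anb a n = sigmaA n.
Proof.
  destruct (A_trans a) as [phi [[H1 H2] <-]].
  unfold sigmaA. apply auto_count; auto.
Qed.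

Lemma submultH m n : (sigmaH (m + n) <= sigmaH m * sigmaH n)%nat.
Proof. apply (submult HV_eq_dec hnb sigmaH H_origin); apply countH. Qed.
Lemma submultA m n : (sigmaA (m + n) <= sigmaA m * sigmaA n)%nat.
Proof. apply (submult AV_eq_dec anb sigmaA A_origin); apply countA. Qed.

Lemma ln_le' x y : 0 < x -> x <= y -> ln x <= ln y.
Proof.
  intros Hx Hxy. destruct (Rle_lt_or_eq _ _ Hxy) as [H|H].
  - left; apply ln_increasing; auto.
  - subst; lra.
Qed.

Lemma exp_mul_pow n L : exp (INR n * L) = exp L ^ n.
Proof.
  induction n as [|n IH].
  - simpl. rewrite Rmult_0_l, exp_0; reflexivity.
  - rewrite <- tech_pow_Rmult, S_INR, Rmult_plus_distr_r, Rmult_1_l, exp_plus, IH. ring.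
Qed.

Section Fekete.
Variable s : nat -> nat.
Hypothesis s_pos : forall n, (1 <= s n)%nat.
Hypothesis s_sub : forall m n, (s (m + n) <= s m * s n)%nat.

Definition bb n := ln (INR (s n)).

Lemma INR_s_pos n : 0 < INR (s n).
Proof. apply lt_0_INR. pose proof (s_pos n). lia. Qed.

Lemma INR_s_ge1 n : 1 <= INR (s n).
Proof. replace 1 with (INR 1) by reflexivity. apply le_INR, s_pos. Qed.

Lemma bb_nonneg n : 0 <= bb n.
Proof. unfold bb. rewrite <- ln_1. apply ln_le'; [lra|apply INR_s_ge1]. Qed.

Lemma bb_sub m n : bb (m + n) <= bb m + bb n.
Proof.
  unfold bb. rewrite <- ln_mult by apply INR_s_pos.
  apply ln_le'; [apply INR_s_pos|]. rewrite <- mult_INR. apply le_INR, s_sub.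
Qed.

Lemma bb_lin q k r : bb (q * k + r) <= INR q * bb k + bb r.
Proof.
  induction q as [|q IH]; [simpl; lra|].
  replace (S q * k + r)%nat with (k + (q * k + r))%nat by lia.
  eapply Rle_trans; [apply bb_sub|]. rewrite S_INR. lra.
Qed.

Lemma bb_le1 r : bb r <= INR r * bb 1 + bb 0.
Proof.
  pose proof (bb_lin r 1 0). rewrite Nat.mul_1_r, Nat.add_0_r in H.
  lra.
Qed.

Definition Eset (r : R) := exists n, (1 <= n)%nat /\ r = - (bb n / INR n).

Lemma Eset_bound : bound Eset.
Proof.
  exists 0. intros r [n [Hn ->]].
  assert (0 < INR n) by (apply lt_0_INR; lia).
  pose proof (bb_nonneg n).
  assert (0 <= bb n / INR n) by (apply Rmult_le_pos; [lra|left; apply Rinv_0_lt_compat; lra]). lra.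
Qed.

Lemma Eset_ne : exists r, Eset r.
Proof. exists (- (bb 1 / INR 1)). exists 1%nat. split; auto. Qed.

Definition lubE := proj1_sig (completeness Eset Eset_bound Eset_ne).
Definition LL := - lubE.

Lemma LL_le n : (1 <= n)%nat -> LL <= bb n / INR n.
Proof.
  intros Hn. unfold LL, lubE. pose proof (proj2_sig (completeness Eset Eset_bound Eset_ne)) as [Hub _].
  set (l := proj1_sig _) in *.
  assert (Eset (- (bb n / INR n))) by (exists n; auto).
  apply Hub in H. lra.
Qed.

Lemma LL_nonneg : 0 <= LL.
Proof.
  unfold LL, lubE. pose proof (proj2_sig (completeness Eset Eset_bound Eset_ne)) as [_ Hl].
  set (l := proj1_sig _) in *.
  assert (l <= 0); [|lra]. apply Hl. intros r [n [Hn ->]].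
  assert (0 < INR n) by (apply lt_0_INR; lia).
  pose proof (bb_nonneg n).
  assert (0 <= bb n / INR n) by (apply Rmult_le_pos; [lra|left; apply Rinv_0_lt_compat; lra]). lra.
Qed.

Lemma LL_approx eps : 0 < eps -> exists k, (1 <= k)%nat /\ bb k / INR k < LL + eps.
Proof.
  intros He. unfold LL, lubE. pose proof (proj2_sig (completeness Eset Eset_bound Eset_ne)) as [Hub Hl].
  set (l := proj1_sig _) in *.
  destruct (Classical_Prop.classic (exists k, (1 <= k)%nat /\ bb k / INR k < - l + eps))
    as [H|H]; auto.
  exfalso. assert (l <= l - eps); [|lra]. apply Hl.
  intros r [n [Hn ->]].
  destruct (Rlt_le_dec (bb n / INR n) (- l + eps)) as [H1|H1].
  - exfalso; apply H; exists n; auto.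
  - lra.
Qed.

Lemma bb_cv : Un_cv (fun n => bb n / INR n) LL.
Proof.
  intros eps He.
  destruct (LL_approx (eps / 2)) as [k [Hk Hbk]]; [lra|].
  assert (Hkpos : 0 < INR k) by (apply lt_0_INR; lia).
  set (C := INR k * bb 1 + bb 0 + 1).
  assert (HC : 0 < C) by (unfold C; pose proof (bb_nonneg 1); pose proof (bb_nonneg 0); nra).
  destruct (archimed (2 * C / eps)) as [Harch _].
  exists (S (Z.to_nat (up (2 * C / eps)))).
  intros n Hn. unfold Rdist.
  assert (Hn1 : (1 <= n)%nat) by lia.
  assert (Hnpos : 0 < INR n) by (apply lt_0_INR; lia).
  pose proof (LL_le n Hn1).
  assert (Hnbig : 2 * C / eps < INR n).
  { eapply Rlt_le_trans; [apply Harch|].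
    destruct (Z_lt_le_dec (up (2 * C / eps)) 0) as [Hz|Hz].
    - apply Rle_trans with 0; [apply IZR_le; lia|left; auto].
    - rewrite <- (Z2Nat.id (up _)) by lia. rewrite <- INR_IZR_INZ.
      apply le_INR. lia. }
  assert (Hdm := Nat.div_mod n k ltac:(lia)).
  set (q := (n / k)%nat) in *. set (r := (n mod k)%nat) in *.
  assert (Hr : (r < k)%nat) by (apply Nat.mod_upper_bound; lia).
  assert (Hb : bb n <= INR q * bb k + INR k * bb 1 + bb 0).
  { rewrite Hdm. replace (k * q + r)%nat with (q * k + r)%nat by lia.
    eapply Rle_trans; [apply bb_lin|].
    pose proof (bb_le1 r). assert (INR r <= INR k) by (apply le_INR; lia).
    pose proof (bb_nonneg 1). nra. }
  assert (Hqk : INR q * INR k <= INR n).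
  { rewrite <- mult_INR. apply le_INR. lia. }
  assert (Hq0 : 0 <= INR q) by apply pos_INR.
  assert (bb n / INR n <= bb k / INR k + eps / 2).
  { apply Rmult_le_reg_r with (INR n); auto.
    unfold Rdiv. rewrite Rmult_assoc, Rinv_l by lra. rewrite Rmult_1_r.
    rewrite Rmult_plus_distr_r.
    assert (HA : bb k * / INR k * INR n >= INR q * bb k).
    { pose proof (bb_nonneg k).
      assert (bb k * / INR k * INR n >= bb k * / INR k * (INR q * INR k)).
      { apply Rle_ge. apply Rmult_le_compat_l; auto.
        apply Rmult_le_pos; auto. left; apply Rinv_0_lt_compat; auto. }
      replace (bb k * / INR k * (INR q * INR k)) with (INR q * bb k) in H1
        by (field; lra). lra. }
    assert (HB : eps * / 2 * INR n >= C).
    { apply Rle_ge. apply Rmult_lt_compat_r with (r := eps / 2) in Hnbig; [|lra].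
      unfold Rdiv in Hnbig. replace (2 * C * / eps * (eps * / 2)) with C in Hnbig
        by (field; lra). lra. }
    unfold C in HB. lra. }
  rewrite Rabs_right; lra.
Qed.

Definition kappa := exp LL.

Lemma fekete_cv : Un_cv (fun n => Rpower (INR (s n)) (/ INR n)) kappa.
Proof.
  unfold kappa.
  assert (Un_cv (fun n => exp (bb n / INR n)) (exp LL)).
  { apply continuity_seq; [apply derivable_continuous_pt, derivable_pt_exp|].
    apply bb_cv. }
  intros e He. destruct (H e He) as [N HN]. exists N. intros n Hn.
  unfold Rpower. replace (/ INR n * ln (INR (s n))) with (bb n / INR n)
    by (unfold bb, Rdiv; ring). apply HN; auto.
Qed.

Lemma kappa_ge1 : 1 <= kappa.
Proof. unfold kappa. pose proof LL_nonneg. pose proof (exp_ineq1_le LL). lra. Qed.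

Lemma kappa_pow_le n : kappa ^ n <= INR (s n).
Proof.
  unfold kappa. rewrite <- exp_mul_pow.
  destruct n as [|n].
  - simpl. rewrite Rmult_0_l, exp_0. apply INR_s_ge1.
  - rewrite <- (exp_ln (INR (s (S n)))) by apply INR_s_pos.
    assert (0 < INR (S n)) by (apply lt_0_INR; lia).
    pose proof (LL_le (S n) ltac:(lia)).
    assert (INR (S n) * LL <= bb (S n)).
    { apply Rmult_le_compat_l with (r := INR (S n)) in H0; [|lra].
      replace (INR (S n) * (bb (S n) / INR (S n))) with (bb (S n)) in H0 by (field; lra).
      lra. }
    destruct (Rle_lt_or_eq _ _ H1) as [H2|H2].
    + left; apply exp_increasing; auto.
    + unfold bb in H2; rewrite H2; lra.
Qed.

End Fekete.

Lemma fekete (s : nat -> nat) :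
  (forall n, (1 <= s n)%nat) -> (forall m n, (s (m + n) <= s m * s n)%nat) ->
  exists k, 1 <= k /\ Un_cv (fun n => Rpower (INR (s n)) (/ INR n)) k /\
            forall n, k ^ n <= INR (s n).
Proof.
  intros H1 H2. exists (kappa s H1). split; [apply kappa_ge1; auto|].
  split; [apply fekete_cv; auto|]. intros n; apply kappa_pow_le; auto.
Qed.

Definition seg (i j : dir) (b : bool) : list dir :=
  if dir_eq_dec i j then [] else
  if dir_eq_dec j (dir_next i) then (if b then [D2; D2] else [D1])
  else (if b then [D1; D1] else [D2]).

Ltac ddir := repeat match goal with
  | d : dir |- _ => destruct d
  | b : bool |- _ => destruct b end.

Lemma seg_fst v i j b a : In a (traj anb (v, i) (seg i j b)) -> fst a = v.
Proof. ddir; simpl; intuition (subst; reflexivity). Qed.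

Lemma seg_NoDup v i j b : NoDup (traj anb (v, i) (seg i j b)).
Proof.
  ddir; simpl;
  repeat (apply NoDup_cons; [simpl; intros Hx;
    repeat match goal with
    | H : _ \/ _ |- _ => destruct H as [H|H]
    | H : False |- _ => destruct H
    | H : (_, _) = (_, _) |- _ => inversion H
    end|]); apply NoDup_nil.
Qed.

Lemma seg_end v i j b : wend anb (v, i) (seg i j b) = (v, j).
Proof. ddir; reflexivity. Qed.

Lemma seg_in_i v i j b : In (v, i) (traj anb (v, i) (seg i j b)).
Proof. ddir; simpl; auto. Qed.

Lemma seg_in_j v i j b : In (v, j) (traj anb (v, i) (seg i j b)).
Proof. ddir; simpl; auto. Qed.

Lemma seg_len_ij i j b : i <> j -> length (seg i j b) = if b then 2%nat else 1%nat.
Proof. ddir; simpl; intros H; try reflexivity; congruence. Qed.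

Lemma seg_len_le i j b : (length (seg i j b) <= 2)%nat.
Proof. ddir; simpl; lia. Qed.

Lemma seg_len_false i j : (length (seg i j false) <= 1)%nat.
Proof. ddir; simpl; lia. Qed.

Lemma seg_nil i j b : seg i j b = [] -> i = j.
Proof. ddir; simpl; intros H; try reflexivity; discriminate. Qed.

Lemma seg_diff i j : i <> j -> hd_error (seg i j false) <> hd_error (seg i j true).
Proof. ddir; simpl; intros H; try congruence; discriminate. Qed.

Lemma traj_seg v i j b r :
  traj anb (v, i) (seg i j b ++ D0 :: r) =
  traj anb (v, i) (seg i j b) ++ traj anb (hnb v j, j) r.
Proof. rewrite traj_app', seg_end. reflexivity. Qed.

Fixpoint projA (i : dir) (c : list dir) : list dir :=
  match c with
  | [] => []
  | D0 :: c' => i :: projA i c'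
  | D1 :: c' => projA (dir_next i) c'
  | D2 :: c' => projA (dir_next (dir_next i)) c'
  end.

Lemma projA_seg i j b r : projA i (seg i j b ++ D0 :: r) = j :: projA j r.
Proof. ddir; reflexivity. Qed.

Lemma projA_len i c : (length (projA i c) <= length c)%nat.
Proof.
  revert i; induction c as [|d c IH]; intros i; simpl; [lia|].
  pose proof (IH i); pose proof (IH (dir_next i)); pose proof (IH (dir_next (dir_next i))).
  destruct d; simpl; lia.
Qed.

Definition TS : list (list dir) := [[]; [D1]; [D2]; [D1; D1]; [D2; D2]].

Lemma TS_proj i c : In c TS -> projA i c = [].
Proof. simpl; intuition (subst; reflexivity). Qed.

Lemma traj_head {V : Type} (nb : V -> dir -> V) v ds : In v (traj nb v ds).
Proof. destruct ds; simpl; auto. Qed.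

Ltac solve_in := repeat (first [left; reflexivity | apply traj_head | right]).
Ltac dupcontra H := let Hn := fresh in
  (apply NoDup_cons_iff in H; destruct H as [Hn H];
   first [apply Hn; simpl; solve_in; fail | dupcontra H]).

Lemma decomp u j c : NoDup (traj anb (u, j) c) ->
  In c TS \/ exists j1 b c', c = seg j j1 b ++ D0 :: c'.
Proof.
  intros H.
  destruct c as [|d1 c]; [left; simpl; solve_in|].
  destruct d1.
  - right. exists j, false, c. destruct j; reflexivity.
  - destruct c as [|d2 c]; [left; simpl; solve_in|]. destruct d2.
    + right. exists (dir_next j), false, c. destruct j; reflexivity.
    + destruct c as [|d3 c]; [left; simpl; solve_in|]. destruct d3.
      * right. exists (dir_next (dir_next j)), true, c. destruct j; reflexivity.
      * exfalso. destruct j; simpl in H;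
dupcontra H.
      * exfalso. destruct j; simpl in H;
dupcontra H.
    + exfalso. destruct j; simpl in H;
dupcontra H.
  - destruct c as [|d2 c]; [left; simpl; solve_in|]. destruct d2.
    + right. exists (dir_next (dir_next j)), false, c. destruct j; reflexivity.
    + exfalso. destruct j; simpl in H;
dupcontra H.
    + destruct c as [|d3 c]; [left; simpl; solve_in|]. destruct d3.
      * right. exists (dir_next j), true, c. destruct j; reflexivity.
      * exfalso. destruct j; simpl in H;
dupcontra H.
      * exfalso. destruct j; simpl in H;
dupcontra H.
Qed.

Fixpoint cdb (i : dir) (w : list dir) : bool :=
  match w with
  | [] => true
  | j :: w' => (if dir_eq_dec i j then false else true) && cdb j w'
  end.

Fixpoint GB (T : list (list dir)) (i : dir) (w : list dir) : list (list dir) :=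
  match w with
  | [] => T
  | j :: w' => flat_map (fun b => map (fun r => seg i j b ++ D0 :: r) (GB T j w')) [false; true]
  end.

Lemma GB_in T i j w' c : In c (GB T i (j :: w')) <->
  exists b r, In r (GB T j w') /\ c = seg i j b ++ D0 :: r.
Proof.
  simpl. rewrite in_app_iff, app_nil_r, !in_map_iff. split.
  - intros [[r [<- Hr]]|[r [<- Hr]]]; eauto.
  - intros [b [r [Hr ->]]]. destruct b; [right|left]; eauto.
Qed.

Lemma GB_proj T i w c :
  (forall t k, In t T -> projA k t = []) -> In c (GB T i w) -> projA i c = w.
Proof.
  intros HT. revert i c; induction w as [|j w IH]; intros i c Hc.
  - simpl in Hc. apply HT; auto.
  - apply GB_in in Hc. destruct Hc as [b [r [Hr ->]]].
    rewrite projA_seg. f_equal. apply IH; auto.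
Qed.

Lemma map_pref_NoDup (p : list dir) L : NoDup L -> NoDup (map (fun r => p ++ D0 :: r) L).
Proof.
  intros H. apply NoDup_map_NoDup_ForallPairs; auto.
  intros a b _ _ E. apply app_inv_head in E. injection E; auto.
Qed.

Lemma GB_NoDup T i w : NoDup T -> cdb i w = true -> NoDup (GB T i w).
Proof.
  intros HT. revert i; induction w as [|j w IH]; intros i Hc; simpl; auto.
  simpl in Hc. destruct (dir_eq_dec i j) as [E|E]; [discriminate|].
  simpl in Hc. rewrite app_nil_r.
  apply NoDup_app; try (apply map_pref_NoDup; auto).
  intros c H1 H2. apply in_map_iff in H1, H2.
  destruct H1 as [r1 [<- _]]. destruct H2 as [r2 [E2 _]].
  revert E2. clear -E. ddir; simpl; try congruence; discriminate.
Qed.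

Lemma GB_saw i w u c : In c (GB [[]] i w) -> NoDup (traj hnb u w) ->
  NoDup (traj anb (u, i) c) /\ (forall a, In a (traj anb (u, i) c) -> In (fst a) (traj hnb u w)).
Proof.
  revert i u c; induction w as [|j w IH]; intros i u c Hc Hnd.
  - simpl in Hc. destruct Hc as [<-|[]]. simpl. split.
    + repeat constructor; simpl; tauto.
    + intros a [<-|[]]; simpl; auto.
  - apply GB_in in Hc. destruct Hc as [b [r [Hr ->]]].
    simpl in Hnd. apply NoDup_cons_iff in Hnd. destruct Hnd as [Hu Hnd].
    destruct (IH j (hnb u j) r Hr Hnd) as [IH1 IH2].
    rewrite traj_seg. split.
    + apply NoDup_app; auto; [apply seg_NoDup|].
      intros a Ha1 Ha2. apply seg_fst in Ha1. apply IH2 in Ha2. subst. contradiction.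
    + intros a Ha. apply in_app_iff in Ha. destruct Ha as [Ha|Ha].
      * apply seg_fst in Ha. rewrite Ha. simpl; auto.
      * simpl. right. apply IH2; auto.
Qed.

Lemma GB_len i w c : In c (GB [[]] i w) -> (length c <= 3 * length w)%nat.
Proof.
  revert i c; induction w as [|j w IH]; intros i c Hc.
  - simpl in Hc. destruct Hc as [<-|[]]. simpl; lia.
  - apply GB_in in Hc. destruct Hc as [b [r [Hr ->]]].
    rewrite length_app. simpl. pose proof (seg_len_le i j b). pose proof (IH _ _ Hr). lia.
Qed.

Lemma hsaw_cdb u j w : NoDup (traj hnb u (j :: w)) -> cdb j w = true.
Proof.
  revert u j; induction w as [|k w IH]; intros u j H; simpl; auto.
  destruct (dir_eq_dec j k) as [E|E].
  - subst. exfalso. simpl in H. apply NoDup_cons_iff in H. destruct H as [Hn _].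
    apply Hn. simpl. right. rewrite hnb_inv. apply traj_head.
  - simpl. apply (IH (hnb u j)). simpl in H. apply NoDup_cons_iff in H. apply H.
Qed.

Lemma NoDup_app_dis {A : Type} (l1 l2 : list A) a :
  NoDup (l1 ++ l2) -> In a l1 -> In a l2 -> False.
Proof.
  induction l1 as [|x l1 IH]; simpl; intros H H1 H2; [auto|].
  apply NoDup_cons_iff in H. destruct H as [Hn H].
  destruct H1 as [<-|H1]; [apply Hn; apply in_app_iff; auto|eauto].
Qed.

Lemma pig (a b j j1 : dir) : a <> b -> j <> j1 -> a = j \/ a = j1 \/ b = j \/ b = j1.
Proof. ddir; intros; try tauto; try (left; reflexivity); try (right; left; reflexivity);
  try (right; right; left; reflexivity); try (right; right; right; reflexivity); congruence. Qed.

Lemma UB_inv : forall n c u j, (length c <= n)%nat ->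
  NoDup (traj anb (u, j) c) -> hd_error c <> Some D0 ->
  In c (GB TS j (projA j c)) /\ cdb j (projA j c) = true /\
  NoDup (traj hnb u (removelast (projA j c))) /\
  (projA j c <> [] -> forall y, In y (traj hnb u (removelast (projA j c))) ->
     exists a b, a <> b /\ In (y, a) (traj anb (u, j) c) /\ In (y, b) (traj anb (u, j) c)).
Proof.
  induction n as [|n IH]; intros c u j Hlen Hnd Hhd.
  - destruct c; [|simpl in Hlen; lia]. simpl. split; [|split; [|split]].
    + left; reflexivity.
    + reflexivity.
    + repeat constructor; simpl; tauto.
    + intros H; congruence.
  - destruct (decomp u j c Hnd) as [HT|[j1 [b [c' ->]]]].
    + rewrite (TS_proj j c HT). simpl. split; [|split; [|split]].
      * exact HT.
      * reflexivity.
      * repeat constructor; simpl; tauto.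
      * intros H; congruence.
    + assert (Hjj : j <> j1).
      { intros <-. apply Hhd. destruct j; reflexivity. }
      rewrite projA_seg. rewrite traj_seg in Hnd.
      pose proof (NoDup_app_remove_l _ _ Hnd) as Hnd'.
      assert (Hdis : forall a, In a (traj anb (u, j) (seg j j1 b)) ->
                             In a (traj anb (hnb u j1, j1) c') -> False).
      { intros a H1 H2. eapply NoDup_app_dis; eauto. }
      assert (Hhd' : hd_error c' <> Some D0).
      { destruct c' as [|d c'']; simpl; [congruence|]. intros E; injection E; intros ->.
        apply (Hdis (u, j1)); [apply seg_in_j|]. simpl. right.
        rewrite hnb_inv. apply traj_head. }
      assert (Hl' : (length c' <= n)%nat).
      { rewrite length_app in Hlen. simpl in Hlen. lia. }
      destruct (IH c' (hnb u j1) j1 Hl' Hnd' Hhd') as [I1 [I2 [I3 I4]]].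
      split; [|split; [|split]].
      * apply GB_in. exists b, c'. auto.
      * simpl. destruct (dir_eq_dec j j1); [contradiction|]. simpl; auto.
      * destruct (projA j1 c') as [|k w'] eqn:Ew.
        -- simpl. repeat constructor; simpl; tauto.
        -- change (removelast (j1 :: k :: w')) with (j1 :: removelast (k :: w')).
           simpl. constructor; auto.
           intros Hin. destruct (I4 ltac:(congruence) u Hin) as [a [a' [Ha [Ha1 Ha2]]]].
           destruct (pig a a' j j1 Ha Hjj) as [E|[E|[E|E]]]; subst.
           ++ apply (Hdis (u, j)); auto. apply seg_in_i.
           ++ apply (Hdis (u, j1)); auto. apply seg_in_j.
           ++ apply (Hdis (u, j)); auto. apply seg_in_i.
           ++ apply (Hdis (u, j1)); auto. apply seg_in_j.
      * intros _ y Hy. rewrite traj_seg.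
        destruct (projA j1 c') as [|k w'] eqn:Ew.
        -- simpl in Hy. destruct Hy as [<-|[]].
           exists j, j1. split; auto. split; apply in_app_iff; left;
           [apply seg_in_i|apply seg_in_j].
        -- change (removelast (j1 :: k :: w')) with (j1 :: removelast (k :: w')) in Hy.
           simpl in Hy. destruct Hy as [<-|Hy].
           ++ exists j, j1. split; auto. split; apply in_app_iff; left;
              [apply seg_in_i|apply seg_in_j].
           ++ destruct (I4 ltac:(congruence) y Hy) as [a [a' [Ha [Ha1 Ha2]]]].
              exists a, a'. split; auto. split; apply in_app_iff; right; auto.
Qed.

Definition sumR {A : Type} (F : A -> R) (l : list A) : R :=
  fold_right (fun a acc => F a + acc) 0 l.

Lemma sumR_app {A} (F : A -> R) l1 l2 : sumR F (l1 ++ l2) = sumR F l1 + sumR F l2.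
Proof. induction l1; simpl; [ring|rewrite IHl1; ring]. Qed.

Lemma sumR_flat_map {A B} (F : B -> R) (G : A -> list B) l :
  sumR F (flat_map G l) = sumR (fun a => sumR F (G a)) l.
Proof. induction l; simpl; [reflexivity|rewrite sumR_app, IHl; reflexivity]. Qed.

Lemma sumR_map {A B} (F : B -> R) (g : A -> B) l : sumR F (map g l) = sumR (fun a => F (g a)) l.
Proof. induction l; simpl; [reflexivity|rewrite IHl; reflexivity]. Qed.

Lemma sumR_ext_eq {A} (F G : A -> R) l : (forall a, F a = G a) -> sumR F l = sumR G l.
Proof. intros H; induction l; simpl; [reflexivity|rewrite H, IHl; reflexivity]. Qed.

Lemma sumR_le {A} (F G : A -> R) l : (forall a, In a l -> F a <= G a) -> sumR F l <= sumR G l.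
Proof.
  induction l; simpl; intros H; [lra|].
  pose proof (H a (or_introl eq_refl)). assert (sumR F l <= sumR G l) by (apply IHl; auto). lra.
Qed.

Lemma sumR_nonneg {A} (F : A -> R) l : (forall a, 0 <= F a) -> 0 <= sumR F l.
Proof. intros H; induction l; simpl; [lra|]. pose proof (H a); lra. Qed.

Lemma sumR_const {A} (F : A -> R) l K : (forall a, In a l -> F a = K) -> sumR F l = INR (length l) * K.
Proof.
  induction l; simpl; intros H; [ring|].
  rewrite IHl by auto. rewrite H by auto. destruct (length l); simpl; ring.
Qed.

Lemma sumR_const_le {A} (F : A -> R) l K : (forall a, In a l -> F a <= K) -> sumR F l <= INR (length l) * K.
Proof.
  intros H. rewrite <- (sumR_const (fun _ => K) l K) by auto. apply sumR_le; auto.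
Qed.

Lemma sumR_const_ge {A} (F : A -> R) l K : (forall a, In a l -> K <= F a) -> INR (length l) * K <= sumR F l.
Proof.
  intros H. rewrite <- (sumR_const (fun _ => K) l K) by auto. apply sumR_le; auto.
Qed.

Lemma sumR_incl {A} (F : A -> R) (l l' : list A) :
  (forall a, 0 <= F a) -> NoDup l -> incl l l' -> sumR F l <= sumR F l'.
Proof.
  intros Hpos. revert l'; induction l as [|a l IH]; intros l' Hnd Hinc; simpl.
  - apply sumR_nonneg; auto.
  - apply NoDup_cons_iff in Hnd. destruct Hnd as [Ha Hnd].
    assert (In a l') by (apply Hinc; simpl; auto).
    destruct (in_split a l') as [l1 [l2 ->]]; auto.
    rewrite sumR_app. simpl.
    assert (sumR F l <= sumR F (l1 ++ l2)).
    { apply IH; auto. intros x Hx. assert (In x (l1 ++ a :: l2)) by (apply Hinc; simpl; auto).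
      apply in_app_iff in H0. apply in_app_iff. simpl in H0. destruct H0 as [H0|[H0|H0]]; auto.
      subst; contradiction. }
    rewrite sumR_app in H0. lra.
Qed.

Lemma pow_le1_mono x m n : 0 <= x <= 1 -> (m <= n)%nat -> x ^ n <= x ^ m.
Proof.
  intros Hx Hmn. replace n with (m + (n - m))%nat by lia. rewrite pow_add.
  assert (0 <= x ^ m) by (apply pow_le; lra).
  assert (x ^ (n - m) <= 1) by (rewrite <- (pow1 (n - m)); apply pow_incr; lra).
  assert (0 <= x ^ (n - m)) by (apply pow_le; lra). nra.
Qed.

Section Weights.
Variable x : R.
Hypothesis xpos : 0 < x.
Hypothesis xle1 : x <= 1.

Definition wt (c : list dir) := x ^ length c.
Definition ff := x ^ 2 + x ^ 3.

Lemma wt_pos c : 0 <= wt c.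
Proof. unfold wt; apply pow_le; lra. Qed.

Lemma sumR_pref p L : sumR wt (map (fun r => p ++ D0 :: r) L) = x ^ (length p + 1) * sumR wt L.
Proof.
  induction L; simpl; [ring|]. rewrite IHL. unfold wt.
  rewrite length_app. simpl length.
  replace (length p + S (length a))%nat with ((length p + 1) + length a)%nat by lia.
  rewrite pow_add. ring.
Qed.

Lemma GB_wsum T i w : cdb i w = true -> sumR wt (GB T i w) = ff ^ length w * sumR wt T.
Proof.
  revert i; induction w as [|j w IH]; intros i Hc; simpl; [ring|].
  simpl in Hc. destruct (dir_eq_dec i j) as [E|E]; [discriminate|]. simpl in Hc.
  rewrite app_nil_r, sumR_app, !sumR_pref, IH by auto.
  rewrite !seg_len_ij by auto. unfold ff. simpl. ring.
Qed.

Lemma sumR_sawlist {V} eqd nb (v : V) N :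
  sumR wt (sawlist eqd nb v N) = INR (saw_count eqd nb v N) * x ^ N.
Proof.
  rewrite saw_count_eq. apply sumR_const. intros c Hc. apply in_sawlist in Hc.
  unfold wt; rewrite (proj1 Hc); reflexivity.
Qed.

Lemma sumR_TS : sumR wt TS <= 5.
Proof.
  unfold TS, wt; simpl.
  assert (x * x <= 1) by nra. lra.
Qed.

Definition LBall (n : nat) : list (list dir) :=
  flat_map (fun w => match w with
                     | [] => []
                     | j1 :: w' => map (fun r => seg D0 j1 false ++ D0 :: r) (GB [[]] j1 w')
                     end) (sawlist HV_eq_dec hnb H_origin n).

Lemma lower_comb n : (1 <= n)%nat ->
  INR (sigmaH n) * x ^ 2 * ff ^ (n - 1) <=
  sumR (fun N => INR (sigmaA N) * x ^ N) (seq 0 (S (3 * n))).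
Proof.
  intros Hn.
  transitivity (sumR wt (LBall n)).
  - unfold LBall. rewrite sumR_flat_map. unfold sigmaH. rewrite saw_count_eq.
    rewrite Rmult_assoc. apply sumR_const_ge. intros w Hw.
    apply in_sawlist in Hw. destruct Hw as [Hl Hnd].
    destruct w as [|j1 w']; [simpl in Hl; lia|].
    rewrite sumR_pref, GB_wsum by (eapply hsaw_cdb; eauto).
    simpl in Hl. replace (n - 1)%nat with (length w') by lia.
    simpl sumR. unfold wt at 1. simpl. rewrite Rplus_0_r, Rmult_1_r.
    assert (x ^ 2 <= x ^ (length (seg D0 j1 false) + 1)).
    { apply pow_le1_mono; [lra|]. pose proof (seg_len_false D0 j1). lia. }
    assert (0 <= ff ^ length w') by (apply pow_le; unfold ff; pose proof (pow_le x 2); pose proof (pow_le x 3); lra).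
    nra.
  - transitivity (sumR wt (flat_map (fun N => sawlist AV_eq_dec anb A_origin N) (seq 0 (S (3 * n))))).
    + apply sumR_incl; [apply wt_pos| |].
      * unfold LBall. apply NoDup_flat_map'.
        -- apply sawlist_NoDup.
        -- intros w Hw. destruct w as [|j1 w']; [constructor|].
           apply map_pref_NoDup. apply GB_NoDup; [repeat constructor; simpl; tauto|].
           apply in_sawlist in Hw. eapply hsaw_cdb; apply Hw.
        -- intros w1 w2 c _ _ H1 H2.
           destruct w1 as [|j1 w1]; [destruct H1|]. destruct w2 as [|j2 w2]; [destruct H2|].
           apply in_map_iff in H1, H2. destruct H1 as [r1 [<- Hr1]]. destruct H2 as [r2 [E Hr2]].
           pose proof (f_equal (projA D0) E) as E'. rewrite !projA_seg in E'.
           assert (HT : forall (t : list dir) (k : dir), In t [[]] -> projA k t = [])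
             by (intros t k [<-|[]]; reflexivity).
           rewrite (GB_proj _ _ _ _ HT Hr1), (GB_proj _ _ _ _ HT Hr2) in E'. congruence.
      * intros c Hc. unfold LBall in Hc. apply in_flat_map in Hc.
        destruct Hc as [w [Hw Hc]]. destruct w as [|j1 w']; [destruct Hc|].
        apply in_sawlist in Hw. destruct Hw as [Hl Hnd].
        apply in_map_iff in Hc. destruct Hc as [r [<- Hr]].
        assert (HG : In (seg D0 j1 false ++ D0 :: r) (GB [[]] D0 (j1 :: w'))).
        { apply GB_in. eauto. }
        destruct (GB_saw _ _ H_origin _ HG Hnd) as [Hs _].
        pose proof (GB_len _ _ _ HG). simpl in Hl.
        apply in_flat_map. exists (length (seg D0 j1 false ++ D0 :: r)). split.
        -- apply in_seq. simpl in *. lia.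
        -- apply in_sawlist. split; auto.
    + rewrite sumR_flat_map. apply Req_le. apply sumR_ext_eq. intros N. rewrite sumR_sawlist. reflexivity.
Qed.

Lemma back_in u j c : In (u, j) (traj anb (hnb u j, j) (D0 :: c)).
Proof. simpl. right. rewrite hnb_inv. apply traj_head. Qed.

Definition Wset (j1 : dir) (m : nat) : list (list dir) :=
  filter (fun w => andb (cdb j1 w) (sawb HV_eq_dec hnb (hnb H_origin j1) (removelast w))) (all_dirs m).

Definition Wb (m : nat) : nat := match m with 0 => 1 | S m' => 3 * sigmaH m' end.

Lemma Wset_len j1 m : (length (Wset j1 m) <= Wb m)%nat.
Proof.
  destruct m as [|m'].
  - unfold Wset. simpl all_dirs. simpl filter. simpl; lia.
  - simpl Wb. rewrite <- (countH (hnb H_origin j1) m').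
    rewrite saw_count_eq.
    transitivity (length (map (fun p => fst p ++ [snd p])
                 (list_prod (sawlist HV_eq_dec hnb (hnb H_origin j1) m') [D0; D1; D2]))).
    + apply NoDup_incl_length.
      * apply NoDup_filter, all_dirs_NoDup.
      * intros w Hw. unfold Wset in Hw. apply filter_In in Hw.
        destruct Hw as [Hw Hb]. apply all_dirs_len in Hw.
        apply andb_prop in Hb. destruct Hb as [_ Hb]. apply sawb_true in Hb.
        assert (Hne : w <> []) by (intros ->; simpl in Hw; lia).
        apply in_map_iff. exists (removelast w, last w D0). split.
        -- simpl. symmetry. apply app_removelast_last; auto.
        -- apply in_prod.
           ++ apply in_sawlist. split; auto.
              pose proof (app_removelast_last D0 Hne) as E.
              apply (f_equal (@length dir)) in E. rewrite length_app in E. simpl in E. lia.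
           ++ destruct (last w D0); simpl; auto.
    + rewrite length_map, length_prod. simpl. lia.
Qed.

Definition CandA (N : nat) : list (list dir) :=
  TS ++ flat_map (fun j1 => flat_map (fun b =>
          map (fun r => seg D0 j1 b ++ D0 :: r)
              (flat_map (fun m => flat_map (fun w => GB TS j1 w) (Wset j1 m)) (seq 0 (S N))))
          [false; true]) [D0; D1; D2].

Lemma ff_nonneg : 0 <= ff.
Proof. unfold ff. pose proof (pow_le x 2). pose proof (pow_le x 3). lra. Qed.

Lemma upper_comb N :
  INR (sigmaA N) * x ^ N <= 5 + 6 * sumR (fun m => INR (Wb m) * ff ^ m * 5) (seq 0 (S N)).
Proof.
  set (SS := sumR (fun m => INR (Wb m) * ff ^ m * 5) (seq 0 (S N))).
  assert (HS : 0 <= SS).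
  { apply sumR_nonneg. intros m. pose proof (pos_INR (Wb m)). pose proof (pow_le ff m ff_nonneg).
    nra. }
  unfold sigmaA. rewrite <- sumR_sawlist.
  transitivity (sumR wt (CandA N)).
  - apply sumR_incl; [apply wt_pos|apply sawlist_NoDup|].
    intros c Hc. apply in_sawlist in Hc. destruct Hc as [Hl Hnd].
    unfold CandA. apply in_app_iff.
    destruct (decomp _ _ _ Hnd) as [HT|[j1 [b [c' ->]]]]; [left; auto|right].
    unfold A_origin in Hnd. rewrite traj_seg in Hnd.
    pose proof (NoDup_app_remove_l _ _ Hnd) as Hnd'.
    assert (Hhd' : hd_error c' <> Some D0).
    { destruct c' as [|d c'']; simpl; [congruence|]. intros E; injection E; intros ->.
      apply (NoDup_app_dis _ _ (H_origin, j1) Hnd); [apply seg_in_j|]. apply back_in. }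
    destruct (UB_inv (length c') c' _ _ (le_n _) Hnd' Hhd') as [I1 [I2 [I3 _]]].
    apply in_flat_map. exists j1. split; [destruct j1; simpl; auto|].
    apply in_flat_map. exists b. split; [destruct b; simpl; auto|].
    apply in_map_iff. exists c'. split; auto.
    apply in_flat_map. exists (length (projA j1 c')). split.
    + apply in_seq. pose proof (projA_len j1 c'). rewrite length_app in Hl. simpl in Hl. lia.
    + apply in_flat_map. exists (projA j1 c'). split; auto.
      unfold Wset. apply filter_In. split; [apply all_dirs_len; reflexivity|].
      rewrite I2. simpl. apply sawb_true; auto.
  - unfold CandA. rewrite sumR_app.
    assert (sumR wt TS <= 5) by apply sumR_TS.
    assert (sumR (fun j1 => sumR wt (flat_map (fun b =>
          map (fun r => seg D0 j1 b ++ D0 :: r)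
              (flat_map (fun m => flat_map (fun w => GB TS j1 w) (Wset j1 m)) (seq 0 (S N))))
          [false; true])) [D0; D1; D2] <= INR 3 * (INR 2 * SS)); [|rewrite sumR_flat_map; simpl INR in *; lra].
    apply sumR_const_le. intros j1 _. rewrite sumR_flat_map. apply sumR_const_le. intros b _.
    rewrite sumR_pref.
    assert (Hin : sumR wt (flat_map (fun m => flat_map (fun w => GB TS j1 w) (Wset j1 m)) (seq 0 (S N))) <= SS).
    { rewrite sumR_flat_map. apply sumR_le. intros m _. rewrite sumR_flat_map.
      eapply Rle_trans; [apply sumR_const_le with (K := ff ^ m * 5)|].
      - intros w Hw. unfold Wset in Hw. apply filter_In in Hw. destruct Hw as [Hw Hb].
        apply all_dirs_len in Hw. apply andb_prop in Hb. destruct Hb as [Hb _].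
        rewrite GB_wsum by auto. rewrite Hw. pose proof (pow_le ff m ff_nonneg). nra.
      - pose proof (le_INR _ _ (Wset_len j1 m)). pose proof (pow_le ff m ff_nonneg). nra. }
    assert (0 <= sumR wt (flat_map (fun m => flat_map (fun w => GB TS j1 w) (Wset j1 m)) (seq 0 (S N))))
      by (apply sumR_nonneg; apply wt_pos).
    assert (x ^ (length (seg D0 j1 b) + 1) <= 1) by (rewrite <- (pow1 (length (seg D0 j1 b) + 1)); apply pow_incr; lra).
    assert (0 <= x ^ (length (seg D0 j1 b) + 1)) by (apply pow_le; lra).
    nra.
Qed.

End Weights.

Fixpoint zz (k : nat) : list dir := match k with O => [] | S k' => D0 :: D1 :: zz k' end.

Lemma zz_saw k : forall x y, NoDup (traj hnb (x, y, false) (zz k)) /\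
  forall p, In p (traj hnb (x, y, false) (zz k)) -> (x <= fst (fst p))%Z.
Proof.
  induction k as [|k IH]; intros x y; simpl.
  - split; [repeat constructor; simpl; tauto|]. intros p [<-|[]]; simpl; lia.
  - destruct (IH (x + 1)%Z y) as [H1 H2]. split.
    + constructor; [|constructor]; auto.
      * intros [E|E]; [discriminate|]. apply H2 in E; simpl in E; lia.
      * intros E. apply H2 in E; simpl in E; lia.
    + intros p [<-|[<-|Hp]]; simpl; try lia. apply H2 in Hp; lia.
Qed.

Lemma zz_len k : length (zz k) = (2 * k)%nat.
Proof. induction k; simpl; lia. Qed.

Lemma count_pos {V} eqd nb (v : V) n c :
  (n <= length c)%nat -> NoDup (traj nb v c) -> (1 <= saw_count eqd nb v n)%nat.
Proof.
  intros Hl Hnd. rewrite saw_count_eq.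
  assert (In (firstn n c) (sawlist eqd nb v n)).
  { apply in_sawlist. split; [rewrite length_firstn; lia|].
    rewrite <- (firstn_skipn n c) in Hnd. eapply saw_prefix; eauto. }
  destruct (sawlist eqd nb v n); [destruct H|simpl; lia].
Qed.

Lemma sigmaH_pos n : (1 <= sigmaH n)%nat.
Proof.
  destruct (zz_saw n 0%Z 0%Z) as [H _].
  apply (count_pos _ _ _ _ (zz n)); [rewrite zz_len; lia|exact H].
Qed.

Lemma GB_long i w : exists c, In c (GB [[]] i w) /\ (length w <= length c)%nat.
Proof.
  revert i; induction w as [|j w IH]; intros i.
  - exists []; simpl; auto.
  - destruct (IH j) as [r [Hr Hl]]. exists (seg i j false ++ D0 :: r). split.
    + apply GB_in; eauto.
    + rewrite length_app; simpl; lia.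
Qed.

Lemma sigmaA_pos n : (1 <= sigmaA n)%nat.
Proof.
  destruct (zz_saw n 0%Z 0%Z) as [H _].
  destruct (GB_long D0 (zz n)) as [c [Hc Hl]].
  destruct (GB_saw _ _ H_origin _ Hc H) as [Hs _].
  apply (count_pos _ _ _ _ c); [rewrite zz_len in Hl; lia|exact Hs].
Qed.

Lemma sumR_ge_elem {A} (F : A -> R) l a : (forall b, 0 <= F b) -> In a l -> F a <= sumR F l.
Proof.
  intros H; induction l as [|b l IH]; simpl; [tauto|].
  intros [->|Ha]; [pose proof (sumR_nonneg F l H); lra|].
  pose proof (H b); pose proof (IH Ha); lra.
Qed.

Lemma upper_from_cv (s : nat -> nat) k r :
  Un_cv (fun n => Rpower (INR (s n)) (/ INR n)) k -> (forall n, (1 <= s n)%nat) ->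
  k < r -> 1 <= r ->
  exists C, 1 <= C /\ forall n, INR (s n) <= C * r ^ n.
Proof.
  intros Hcv Hpos Hkr Hr1.
  destruct (Hcv (r - k)) as [N HN]; [lra|].
  set (N' := S N).
  exists (1 + sumR (fun n => INR (s n)) (seq 0 N')). split.
  - pose proof (sumR_nonneg (fun n => INR (s n)) (seq 0 N') (fun n => pos_INR _)). lra.
  - intros n. assert (Hrn : 1 <= r ^ n) by (rewrite <- (pow1 n); apply pow_incr; lra).
    pose proof (sumR_nonneg (fun n => INR (s n)) (seq 0 N') (fun n => pos_INR _)).
    destruct (Nat.lt_ge_cases n N') as [Hn|Hn].
    + assert (INR (s n) <= sumR (fun n => INR (s n)) (seq 0 N')).
      { apply (sumR_ge_elem (fun n => INR (s n))); [intros; apply pos_INR|]. apply in_seq. lia. }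
      nra.
    + assert (Hsn : 0 < INR (s n)) by (apply lt_0_INR; pose proof (Hpos n); lia).
      assert (Hn0 : 0 < INR n) by (apply lt_0_INR; unfold N' in Hn; lia).
      specialize (HN n ltac:(unfold N' in Hn; lia)). unfold Rdist in HN.
      apply Rabs_def2 in HN. destruct HN as [HN _].
      set (y := Rpower (INR (s n)) (/ INR n)) in *.
      assert (Hy : 0 < y) by (unfold y, Rpower; apply exp_pos).
      assert (E : y ^ n = INR (s n)).
      { rewrite <- Rpower_pow by auto. unfold y. rewrite Rpower_mult.
        rewrite Rinv_l by lra. apply Rpower_1; auto. }
      rewrite <- E. assert (y ^ n <= r ^ n) by (apply pow_incr; lra). nra.
Qed.

Lemma bernoulli h n : 0 <= h -> 1 + INR n * h <= (1 + h) ^ n.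
Proof.
  intros Hh. induction n as [|n IH]; [simpl; lra|].
  rewrite S_INR. simpl pow. assert (0 <= INR n * h) by (apply Rmult_le_pos; auto; apply pos_INR). nra.
Qed.

Lemma no_poly_bound r a b : 1 < r -> (forall n, r ^ n <= a * INR n + b) -> False.
Proof.
  intros Hr H. set (h := r - 1).
  assert (Hh : 0 < h) by (unfold h; lra).
  set (K := Rabs a * 2 + Rabs b + 1).
  destruct (archimed (K / (h * h))) as [Ha _].
  set (n := S (Z.to_nat (up (K / (h * h))))).
  assert (Hn : K / (h * h) < INR n).
  { eapply Rlt_le_trans; [apply Ha|]. unfold n. rewrite S_INR.
    destruct (Z_lt_le_dec (up (K / (h * h))) 0) as [Hz|Hz].
    - apply Rle_trans with 0; [apply IZR_le; lia|]. pose proof (pos_INR (Z.to_nat (up (K / (h * h))))); lra.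
    - rewrite <- (Z2Nat.id (up _)) at 1 by lia. rewrite <- INR_IZR_INZ. lra. }
  assert (Hn1 : 1 <= INR n) by (unfold n; rewrite S_INR; pose proof (pos_INR (Z.to_nat (up (K / (h * h))))); lra).
  clearbody n.
  specialize (H (n * 2)%nat).
  rewrite pow_mult in H.
  pose proof (bernoulli h n (Rlt_le _ _ Hh)). replace (1 + h) with r in H0 by (unfold h; ring).
  assert (r ^ n * r ^ n >= INR n * h * (INR n * h)).
  { assert (0 <= INR n * h) by (apply Rmult_le_pos; lra). nra. }
  assert (Knh : K < INR n * h * h).
  { apply Rmult_lt_compat_r with (r := h * h) in Hn; [|nra].
    unfold Rdiv in Hn. rewrite Rmult_assoc, Rinv_l in Hn by nra. lra. }
  rewrite mult_INR in H. replace (INR 2) with 2 in H by (simpl; ring).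
  assert (a * (INR n * 2) + b <= INR n * K).
  { unfold K. pose proof (Rle_abs a). pose proof (Rle_abs b). pose proof (Rabs_pos a).
    pose proof (Rabs_pos b). nra. }
  replace ((r ^ n) ^ 2) with (r ^ n * r ^ n) in H by ring.
  nra.
Qed.

Lemma geom_sum q : 0 <= q < 1 -> forall n k, sumR (fun m => q ^ m) (seq k n) <= q ^ k / (1 - q).
Proof.
  intros Hq. induction n as [|n IH]; intros k; simpl.
  - apply Rmult_le_pos; [apply pow_le; lra|left; apply Rinv_0_lt_compat; lra].
  - specialize (IH (S k)). simpl in IH.
    assert (q ^ k + q * q ^ k / (1 - q) = q ^ k / (1 - q)) by (field; lra). lra.
Qed.

Lemma lower_analysis kH kA :
  1 <= kH -> 1 <= kA ->
  (forall n, kH ^ n <= INR (sigmaH n)) ->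
  Un_cv (fun n => Rpower (INR (sigmaA n)) (/ INR n)) kA ->
  forall x, 0 < x -> x * kA < 1 -> kH * ff x <= 1.
Proof.
  intros HkH HkA HpH HcvA x Hx HxA.
  assert (Hx1 : x < 1) by nra.
  set (r := (kA + / x) / 2).
  assert (Hinvx : kA < / x).
  { apply Rmult_lt_reg_l with x; auto. rewrite Rinv_r by lra. lra. }
  assert (Hr : kA < r) by (unfold r; lra).
  assert (Hrx : r * x < 1).
  { unfold r. assert (/ x * x = 1) by (field; lra). nra. }
  destruct (upper_from_cv sigmaA kA r HcvA sigmaA_pos Hr ltac:(lra)) as [C [HC1 HC]].
  assert (HA : forall N, INR (sigmaA N) * x ^ N <= C).
  { intros N. specialize (HC N).
    assert (0 <= x ^ N) by (apply pow_le; lra).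
    assert ((r * x) ^ N <= 1) by (rewrite <- (pow1 N); apply pow_incr; split; [nra|lra]).
    rewrite Rpow_mult_distr in H0. nra. }
  assert (Hff : 0 < ff x) by (unfold ff; pose proof (pow_lt x 2 Hx); pose proof (pow_lt x 3 Hx); lra).
  destruct (Rle_lt_dec (kH * ff x) 1) as [Hle|Hgt]; auto. exfalso.
  apply (no_poly_bound (kH * ff x) (3 * C * ff x / (x * x)) (C * ff x / (x * x) + 1)); auto.
  intros n. destruct n as [|n].
  - simpl. assert (0 <= C * ff x / (x * x)).
    { apply Rmult_le_pos; [nra|left; apply Rinv_0_lt_compat; nra]. } lra.
  - pose proof (lower_comb x Hx (Rlt_le _ _ Hx1) (S n) ltac:(lia)) as HL.
    assert (Hsum : sumR (fun N => INR (sigmaA N) * x ^ N) (seq 0 (S (3 * S n))) <=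
                   INR (length (seq 0 (S (3 * S n)))) * C).
    { apply sumR_const_le. intros N _. apply HA. }
    rewrite length_seq in Hsum.
    replace (S n - 1)%nat with n in HL by lia.
    pose proof (HpH (S n)) as Hp.
    assert (Hffn : 0 <= ff x ^ n) by (apply pow_le; lra).
    assert (kH ^ S n * x ^ 2 * ff x ^ n <= INR (S (3 * S n)) * C).
    { assert (kH ^ S n * x ^ 2 * ff x ^ n <= INR (sigmaH (S n)) * x ^ 2 * ff x ^ n).
      { apply Rmult_le_compat_r; auto. apply Rmult_le_compat_r; auto. apply pow_le; lra. }
      lra. }
    rewrite Rpow_mult_distr.
    replace (S (3 * S n)) with (3 * S n + 1)%nat in H by lia.
    rewrite plus_INR, mult_INR in H. simpl (INR 1) in H.
    replace (INR 3) with 3 in H by (simpl; ring).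
    apply Rmult_le_reg_r with (x * x); [nra|].
    replace ((3 * C * ff x / (x * x) * INR (S n) + (C * ff x / (x * x) + 1)) * (x * x))
      with ((3 * INR (S n) + 1) * C * ff x + x * x) by (field; lra).
    replace (kH ^ S n * ff x ^ S n * (x * x)) with (kH ^ S n * x ^ 2 * ff x ^ n * ff x)
      by (simpl; ring).
    assert (0 <= x * x) by nra. nra.
Qed.

Lemma upper_analysis kH kA :
  1 <= kH -> 1 <= kA ->
  (forall n, kA ^ n <= INR (sigmaA n)) ->
  Un_cv (fun n => Rpower (INR (sigmaH n)) (/ INR n)) kH ->
  forall x, 0 < x -> kH * ff x < 1 -> x * kA <= 1.
Proof.
  intros HkH HkA HpA HcvH x Hx HxH.
  assert (Hff : 0 < ff x) by (unfold ff; pose proof (pow_lt x 2 Hx); pose proof (pow_lt x 3 Hx); lra).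
  assert (Hx1 : x <= 1).
  { destruct (Rle_lt_dec x 1); auto. exfalso. unfold ff in HxH.
    assert (1 <= x ^ 2) by (rewrite <- (pow1 2); apply pow_incr; lra).
    assert (1 <= x ^ 3) by (rewrite <- (pow1 3); apply pow_incr; lra). nra. }
  set (r := (kH + / ff x) / 2).
  assert (Hinv : kH < / ff x).
  { apply Rmult_lt_reg_l with (ff x); auto. rewrite Rinv_r by lra. lra. }
  assert (Hr : kH < r) by (unfold r; lra).
  assert (Hrf : r * ff x < 1).
  { unfold r. assert (/ ff x * ff x = 1) by (field; lra). nra. }
  destruct (upper_from_cv sigmaH kH r HcvH sigmaH_pos Hr ltac:(lra)) as [C [HC1 HC]].
  set (q := r * ff x).
  assert (Hq : 0 <= q < 1) by (unfold q; split; nra).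
  assert (HW : forall m, INR (Wb m) * ff x ^ m * 5 <= 15 * C * q ^ m).
  { intros m. unfold q. rewrite Rpow_mult_distr.
    assert (0 <= ff x ^ m) by (apply pow_le; lra).
    assert (INR (Wb m) <= 3 * C * r ^ m).
    { destruct m as [|m].
      - simpl. lra.
      - unfold Wb. rewrite mult_INR. replace (INR 3) with 3 by (simpl; ring).
        specialize (HC m). simpl. assert (0 <= r ^ m) by (apply pow_le; lra).
        assert (0 <= C * r ^ m) by nra.
        assert (C * r ^ m <= r * (C * r ^ m)) by nra. nra. }
    nra. }
  assert (HB : forall N, INR (sigmaA N) * x ^ N <= 5 + 6 * (15 * C / (1 - q))).
  { intros N. eapply Rle_trans; [apply upper_comb; lra|].
    assert (sumR (fun m => INR (Wb m) * ff x ^ m * 5) (seq 0 (S N)) <= 15 * C / (1 - q)).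
    { eapply Rle_trans; [apply sumR_le with (G := fun m => 15 * C * q ^ m); intros; apply HW|].
      assert (sumR (fun m => 15 * C * q ^ m) (seq 0 (S N)) = 15 * C * sumR (fun m => q ^ m) (seq 0 (S N))).
      { generalize (seq 0 (S N)). intros l; induction l; simpl; [ring|rewrite IHl; ring]. }
      rewrite H. pose proof (geom_sum q Hq (S N) 0). simpl pow in H0.
      unfold Rdiv in *. nra. }
    lra. }
  destruct (Rle_lt_dec (x * kA) 1) as [Hle|Hgt]; auto. exfalso.
  apply (no_poly_bound (x * kA) 0 (5 + 6 * (15 * C / (1 - q)))); auto.
  intros n. rewrite Rmult_0_l, Rplus_0_l. rewrite Rpow_mult_distr.
  specialize (HB n). specialize (HpA n). assert (0 <= x ^ n) by (apply pow_le; lra). nra.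
Qed.

Theorem mainTheorem5 :
  exists kH kA : R,
    is_connective_constant sigmaH kH /\
    is_connective_constant sigmaA kA /\
    1 / kA ^ 2 + 1 / kA ^ 3 = 1 / kH.
Proof.
  destruct (fekete sigmaH sigmaH_pos submultH) as [kH [HkH [HcvH HpH]]].
  destruct (fekete sigmaA sigmaA_pos submultA) as [kA [HkA [HcvA HpA]]].
  exists kH, kA. split; [exact HcvH|]. split; [exact HcvA|].
  set (a := / kA).
  assert (Ha : 0 < a) by (unfold a; apply Rinv_0_lt_compat; lra).
  assert (HakA : a * kA = 1) by (unfold a; field; lra).
  set (g := kH * ff a).
  assert (Hg0 : 0 < g).
  { unfold g, ff. pose proof (pow_lt a 2 Ha); pose proof (pow_lt a 3 Ha). nra. }
  assert (Hg : g = 1).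
  { destruct (Rtotal_order g 1) as [Hlt|[Heq|Hgt]]; auto; exfalso.
    - set (d := (1 - g) / 8).
      assert (Hd : 0 < d <= 1 / 8) by (unfold d; split; lra).
      set (t := 1 + d).
      assert (Ht : kH * ff (a * t) < 1).
      { assert (ff (a * t) <= t ^ 3 * ff a).
        { unfold ff. rewrite !Rpow_mult_distr.
          assert (t ^ 2 <= t ^ 3) by (unfold t; simpl; nra).
          pose proof (pow_lt a 2 Ha). pose proof (pow_lt a 3 Ha). nra. }
        assert (t ^ 3 <= 1 + 7 * d) by (unfold t; simpl; nra).
        assert (kH * (t ^ 3 * ff a) = t ^ 3 * g) by (unfold g; ring).
        assert (t ^ 3 * g <= (1 + 7 * d) * g) by nra.
        assert ((1 + 7 * d) * g < 1) by (unfold d; nra).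
        nra. }
      pose proof (upper_analysis kH kA HkH HkA HpA HcvH (a * t) ltac:(unfold t; nra) Ht).
      assert (a * t * kA = t) by (rewrite Rmult_comm, <- Rmult_assoc, (Rmult_comm kA), HakA; ring).
      unfold t in *. lra.
    - set (d := (1 - / g) / 6).
      assert (Hig : / g < 1) by (rewrite <- Rinv_1; apply Rinv_lt_contravar; lra).
      assert (Hig0 : 0 < / g) by (apply Rinv_0_lt_compat; lra).
      assert (Hd : 0 < d < 1 / 3) by (unfold d; split; lra).
      set (t := 1 - d).
      assert (Ht0 : 0 < t < 1) by (unfold t; lra).
      assert (Hlow : kH * ff (a * t) > 1).
      { assert (t ^ 3 * ff a <= ff (a * t)).
        { unfold ff. rewrite !Rpow_mult_distr.
          assert (t ^ 3 <= t ^ 2) by (simpl; nra).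
          pose proof (pow_lt a 2 Ha). pose proof (pow_lt a 3 Ha). nra. }
        assert (1 - 3 * d <= t ^ 3) by (unfold t; simpl; nra).
        assert (kH * (t ^ 3 * ff a) = t ^ 3 * g) by (unfold g; ring).
        assert ((1 - 3 * d) * g = (g + 1) / 2) by (unfold d; field; lra).
        assert (kH * ff (a * t) >= kH * (t ^ 3 * ff a)) by nra.
        nra. }
      pose proof (lower_analysis kH kA HkH HkA HpH HcvA (a * t) ltac:(nra)
        ltac:(rewrite Rmult_comm, <- Rmult_assoc, (Rmult_comm kA), HakA; lra)).
      lra. }
  unfold g, ff, a in Hg.
  assert (kH <> 0) by lra. assert (kA <> 0) by lra.
  apply (f_equal (fun z => z / kH)) in Hg.
  replace (kH * ((/ kA) ^ 2 + (/ kA) ^ 3) / kH) with (1 / kA ^ 2 + 1 / kA ^ 3) in Hg by (field; auto).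
  exact Hg.
Qed.
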